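(* For every $\epsilon\in(0,1)$ there exist a constant $M>0$ and an infinite strictly increasing sequence of positive integers $n_1<n_2<\cdots$ such that for all $j$, $$R_3(n_j)\ge M\exp\!\left(\frac{\log(2-\epsilon)\,\log n_j}{\log\log n_j}\right).$$
   Context: For a positive integer $n$, $R_3(n)$ denotes the number of ordered triples $(x,y,z)$ of positive integers with $n = xyz + x + y + z$. *)

(* Defs.v *)
From Stdlib Require Import Reals Arith List.
Import ListNotations.

Definition is_sol (n x y z : nat) : bool := Nat.eqb (x*y*z + x + y + z) n.

(* R_3(n): number of ordered triples (x,y,z) of positive integers with
   n = xyz + x + y + z.  Any such triple has x,y,z <= n, so it suffices
   to range over 1..n in each coordinate. *)
Definition R3 (n : nat) : nat :=
  length (filter (fun t : nat * nat * nat =>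
                    let '(x, y, z) := t in is_sol n x y z)
    (list_prod (list_prod (seq 1 n) (seq 1 n)) (seq 1 n))).

(* Main.v *)
Require Import Defs.
From Stdlib Require Import Reals Lra Lia Psatz.
From mathcomp Require ssreflect ssrfun ssrbool eqtype ssrnat seq div prime bigop binomial path.
From mathcomp Require zify.
Set Warnings "-notation-overridden".
Module NT.
Import ssreflect ssrfun ssrbool eqtype ssrnat seq div prime bigop binomial zify.
Lemma central_ge m : 2 ^ m <= 'C(m.*2, m).
Proof.
elim: m => [|m IH] //.
rewrite doubleS binS.
have E : 'C(m.*2.+1, m.+1) = 'C(m.*2.+1, m).
  have H := @bin_sub (m.*2.+1) m.
  have E2 : m.*2.+1 - m = m.+1 by rewrite -addnn; lia.
  rewrite E2 in H; apply: H; rewrite -addnn; lia.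
rewrite E.
have := leq_bin2l m (leqnSn m.*2).
rewrite expnS. lia.
Qed.
Lemma t1 m q : 0 < q -> m.*2 %/ q <= (m %/ q + m %/ q) + (q <= m.*2).
Proof. move=> q0. case: (leqP q m.*2) => H /=; last by rewrite divn_small.
have E : m.*2 = (m%/q).*2 * q + (m %% q).*2.
  rewrite {1}(divn_eq m q); lia.
rewrite {1}E divnMDl //.
have : (m %% q).*2 %/ q < 2 by rewrite ltn_divLR //; have := ltn_pmod m q0; lia.
lia. Qed.
Lemma t2 e N : \sum_(1 <= k < N.+1) (k <= e) = minn N e.
Proof. elim: N => [|N IH]; first by rewrite big_geq // min0n.
rewrite big_nat_recr //= IH. case: (leqP N.+1 e) => H /=; lia. Qed.

Lemma logn_bin p m : prime p -> logn p 'C(m.*2, m) <= trunc_log p m.*2.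
Proof.
move=> pp.
have p1 := prime_gt1 pp.
have Hmm : m <= m.*2 by rewrite -addnn leq_addr.
have Hf := bin_fact Hmm.
rewrite (_ : m.*2 - m = m) in Hf; last by rewrite -addnn addnK.
have HL : logn p (m.*2)`! = logn p 'C(m.*2, m) + (logn p m`! + logn p m`!).
  by rewrite -Hf !lognM ?fact_gt0 ?muln_gt0 ?fact_gt0 ?bin_gt0.
rewrite !logn_fact // in HL.
set e := trunc_log p m.*2.
have Ext : \sum_(1 <= k < m.+1) m %/ p ^ k = \sum_(1 <= k < m.*2.+1) m %/ p ^ k.
  rewrite (@big_cat_nat _ _ _ m.+1 1 m.*2.+1) //=; try by rewrite -addnn; lia.
  rewrite [X in _ + X]big1_seq ?addn0 // => k /andP[_].
  rewrite mem_index_iota => /andP [Hk _].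
  apply: divn_small. exact: ltn_trans Hk (ltn_expl k p1).
rewrite Ext in HL.
have S1 : \sum_(1 <= k < m.*2.+1) m.*2 %/ p ^ k <=
   \sum_(1 <= k < m.*2.+1) ((m %/ p ^ k + m %/ p ^ k) + (p ^ k <= m.*2)).
  apply: leq_sum => k _. apply: t1. by rewrite expn_gt0 (ltnW p1).
rewrite !big_split /= in S1.
have S2 : \sum_(1 <= k < m.*2.+1) (p ^ k <= m.*2) <= \sum_(1 <= k < m.*2.+1) (k <= e).
  apply: leq_sum => k _. case H: (p ^ k <= m.*2) => //=.
  by rewrite (trunc_log_max p1 H).
rewrite t2 in S2.
have := geq_minr m.*2 e.
lia.
Qed.
Lemma prod_le (r : seq nat) (F G : nat -> nat) :
  (forall i, i \in r -> F i <= G i) -> \prod_(i <- r) F i <= \prod_(i <- r) G i.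
Proof.
elim: r => [|a r IH] H; first by rewrite !big_nil.
rewrite !big_cons leq_mul //; first by apply: H; rewrite mem_head.
by apply: IH => i Hi; apply: H; rewrite in_cons Hi orbT.
Qed.
Lemma prod_const (r : seq nat) c : \prod_(i <- r) c = c ^ size r.
Proof. elim: r => [|a r IH]; first by rewrite big_nil. by rewrite big_cons IH expnS. Qed.

Definition PS (x : nat) := [seq p <- iota 0 x.+1 | prime p].

Lemma bin_bound m : 0 < m -> 'C(m.*2, m) <= (m.*2) ^ size (PS m.*2).
Proof.
move=> m0.
have x0 : 0 < m.*2 by rewrite -addnn; lia.
have C0 : 0 < 'C(m.*2, m) by rewrite bin_gt0 -addnn leq_addl.
rewrite {1}(prod_prime_decomp C0) prime_decompE big_map /=.
apply: (@leq_trans (\prod_(p <- primes 'C(m.*2, m)) m.*2)).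
  apply: prod_le => p Hp.
  have pp : prime p by move: Hp; rewrite mem_primes => /andP[].
  apply: (@leq_trans (p ^ trunc_log p m.*2)).
    by rewrite leq_pexp2l ?prime_gt0 // logn_bin.
  exact: trunc_logP (prime_gt1 pp) x0.
rewrite prod_const leq_pexp2l //.
apply: uniq_leq_size; first exact: primes_uniq.
move=> p Hp.
have pp : prime p by move: Hp; rewrite mem_primes => /andP[].
rewrite mem_filter pp mem_iota add0n ltnS.
have : 0 < trunc_log p m.*2.
  by apply: (leq_trans _ (@logn_bin p m pp : logn p _ <= _)); rewrite logn_gt0.
rewrite trunc_log_gt0 => /andP [_ H]. lia.
Qed.
Lemma ndvd_prod p (S : seq nat) : prime p -> all prime S -> p \notin S ->
  ~~ (p %| \prod_(q <- S) q).
Proof.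
move=> pp; elim: S => [|a S IH] /=.
  by rewrite big_nil dvdn1; move=> _ _; case: eqP => // E; move: pp; rewrite E.
move=> /andP [pa aS]; rewrite in_cons negb_or => /andP [na nS].
rewrite big_cons Euclid_dvdM // negb_or (IH aS nS) andbT dvdn_prime2 //.
Qed.

Lemma many_divs (S : seq nat) : uniq S -> all prime S ->
  exists l : seq nat, [/\ uniq l, size l = 2 ^ size S &
     all (fun d => d %| \prod_(p <- S) p) l].
Proof.
elim: S => [|p S IH] /=.
  by move=> _ _; exists [:: 1]; rewrite big_nil.
move=> /andP [pS uS] /andP [pp aS].
have [l [ul sl al]] := IH uS aS.
have p0 := prime_gt0 pp.
exists (l ++ map (muln p) l); split.
- rewrite cat_uniq ul /=. apply/andP; split.
    apply/hasPn => x /mapP [d Hd ->]. apply/negP => Hpd.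
    have := allP al _ Hpd => /= H.
    have : p %| \prod_(q <- S) q by apply: (dvdn_trans _ H); apply: dvdn_mulr; exact: dvdnn.
    by rewrite (negPf (@ndvd_prod p S pp aS pS)).
  rewrite map_inj_uniq // => a b /eqP; rewrite eqn_pmul2l // => /eqP //.
- by rewrite size_cat size_map sl expnS; lia.
- rewrite all_cat big_cons; apply/andP; split.
    apply/allP => d Hd; apply: dvdn_mull; exact: (allP al).
  apply/allP => x /mapP [d Hd ->]. rewrite dvdn_pmul2l //; exact: (allP al).
Qed.
Lemma In_mem (T : eqType) (a : T) (s : seq T) : List.In a s -> a \in s.
Proof.
elim: s => [|b s IH] //= [->|H]; rewrite in_cons; first by rewrite eqxx.
by rewrite IH ?orbT.
Qed.

Lemma uniq_NoDup (T : eqType) (s : seq T) : uniq s -> List.NoDup s.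
Proof.
elim: s => [|b s IH] /=; first by constructor.
move=> /andP [nb us]; constructor; last exact: IH.
by move=> /In_mem H; rewrite H in nb.
Qed.

Lemma size_length (T : Type) (s : seq T) : size s = List.length s.
Proof. by elim: s => //= a s ->. Qed.

Lemma count_bad n (l : seq nat) : 0 < n -> all (fun d => d %| n) l ->
  count (predC (fun d => 1 < d < n)) l <= count (fun d => d == 1) l + count (fun d => d == n) l.
Proof.
move=> n0; elim: l => [|a l IH] //= /andP [an al].
have := IH al.
have : 0 < a by apply: dvdn_gt0 n0 an.
have : a <= n by apply: dvdn_leq.
move=> H3 H4 H5; case: (a =P 1) => H1; case: (a =P n) => H2; case: (ltnP 1 a) => Ha; case: (ltnP a n) => Hb /=; move: H5; set X := count (predC _) l; set Y := count (fun d => d == 1) l; set Z := count (fun d => d == n) l; lia.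
Qed.

Lemma R3_ge n (l : seq nat) : 0 < n -> uniq l -> all (fun d => d %| n) l ->
  size l <= R3 n + 2.
Proof.
move=> n0 ul al.
set P := (fun d => 1 < d < n).
have E1 := count_predC P l.
have E2 : count (predC P) l <= count (fun d => d == 1) l + count (fun d => d == n) l := @count_bad n l n0 al.
have E3 : count (fun d => d == 1) l <= 1 by rewrite (count_uniq_mem 1) //; case: (1 \in l).
have E4 : count (fun d => d == n) l <= 1 by rewrite (count_uniq_mem n) //; case: (n \in l).
set l2 := [seq d <- l | P d].
have E5 : count P l = size l2 by rewrite size_filter.
suff : size l2 <= R3 n by lia.
set tri := fun d => (1, d - 1, n %/ d - 1).
have Hinj : {in l2 &, injective tri}.
  move=> a b; rewrite !mem_filter => /andP [Pa _] /andP [Pb _] [].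
  rewrite /P in Pa Pb; lia.
have U : uniq (map tri l2) by rewrite map_inj_in_uniq // filter_uniq.
rewrite -(size_map tri) size_length /R3.
apply/leP; apply: List.NoDup_incl_length; first exact: uniq_NoDup.
move=> t /In_mem /mapP [d Hd ->].
move: Hd; rewrite mem_filter => /andP [Pd ld].
have dn : d %| n := allP al d ld.
have Hn := divnK dn.
move: Pd; rewrite /P => /andP [d1 dn2].
set e := n %/ d in Hn *.
have e2 : 1 < e.
  case: (leqP e 1) => H //; exfalso.
  have : e * d <= d by rewrite -[X in _ <= X]mul1n leq_mul2r H orbT.
  lia.
have en : e <= n by rewrite /e leq_div.
apply/List.filter_In; split.
  apply/List.in_prod_iff; split; first (apply/List.in_prod_iff; split).
  - apply/List.in_seq; lia.
  - apply/List.in_seq; lia.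
  - apply/List.in_seq; lia.
rewrite /is_sol; apply/PeanoNat.Nat.eqb_eq.
change (n %/ d) with e.
rewrite -Hn.
clearbody e. clear Hn en ld dn dn2.
move: e2 d1; case: e => [|[|b]] // _; case: d => [|[|a]] // _.
rewrite !subSS !subn0 multE plusE; nia.
Qed.
Lemma expn_pow a b : a ^ b = Nat.pow a b.
Proof. elim: b => [|b IH] //. by rewrite expnS IH. Qed.

Lemma partA m : (0 < m)%coq_nat -> exists k n : nat,
  (Nat.pow 2 m <= Nat.pow (2*m)%coq_nat k)%coq_nat /\
  (n <= Nat.pow (2*m)%coq_nat k)%coq_nat /\
  (Nat.pow 2 k <= n)%coq_nat /\
  (Nat.pow 2 k <= R3 n + 2)%coq_nat.
Proof.
move=> /ltP m0.
set S := PS m.*2.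
have x2 : (2 * m)%coq_nat = m.*2 by rewrite multE mul2n.
exists (size S), (\prod_(p <- S) p).
rewrite x2 -!expn_pow.
have memS : forall p, p \in S -> prime p /\ p <= m.*2.
  by move=> p; rewrite mem_filter mem_iota add0n ltnS => /andP [-> /andP [_ ->]].
have H2 : 2 ^ size S <= \prod_(p <- S) p.
  rewrite -prod_const; apply: prod_le => p /memS [pp _]; exact: prime_gt1.
split; last split; last split.
- apply/leP; exact: (leq_trans (central_ge m) (@bin_bound m m0)).
- apply/leP; rewrite -prod_const; apply: prod_le => p /memS [_ ->] //.
- exact/leP.
- apply/leP.
  have uS : uniq S by rewrite filter_uniq // iota_uniq.
  have aS : all prime S by apply: filter_all.
  have [l [ul sl al]] := @many_divs S uS aS.
  rewrite -sl -plusE; apply: (@R3_ge _ l) => //.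
  by apply: (leq_trans _ H2); rewrite expn_gt0.
Qed.
End NT.
Set Bullet Behavior "Strict Subproofs".
Open Scope R_scope.
Lemma ln_le' x y : 0 < x -> x <= y -> ln x <= ln y.
Proof. intros H1 H2; destruct H2 as [H2|H2]; [left; apply ln_increasing; lra| subst; lra]. Qed.
Lemma exp_le' x y : x <= y -> exp x <= exp y.
Proof. intros [H|H]; [left; apply exp_increasing; lra| subst; lra]. Qed.
Lemma ln_le_sub1 y : 0 < y -> ln y <= y - 1.
Proof. intros Hy. pose proof (exp_ineq1_le (ln y)). rewrite exp_ln in H; lra. Qed.
Lemma ln2_bounds : 0 < ln 2 < 1.
Proof.
split.
- rewrite <- ln_1; apply ln_increasing; lra.
- rewrite <- (ln_exp 1). apply ln_increasing; [lra|].
  pose proof (exp_ineq1 1). lra.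
Qed.

Lemma keyR (c th K L N R3n m : R) :
  0 < c -> c <= th * th * ln 2 -> 1/2 < th < 1 ->
  0 < m -> L = ln (2 * m) ->
  (1 - th) * L / 2 >= ln (2 / (1 - th)) + ln 2 - 2 * ln (ln 2) ->
  th * (1 - th) * L >= 1 ->
  m * ln 2 <= K * L ->
  ln N <= K * L ->
  K * ln 2 <= ln N ->
  Rpower 2 K - 2 <= R3n ->
  th * L <= K /\ 2 < K /\ exp (c * ln N / ln (ln N)) <= R3n.
Proof.
intros Hc Hcth Hth Hm HL H1 H2 Ha Hb Hcc Hd.
pose proof ln2_bounds as Hl2.
set (D := ln (2 / (1 - th))) in *.
set (l := ln (ln 2)) in *.
assert (Pth : 0 < th * (1 - th)) by nra.
assert (Lpos : 0 < L).
{ destruct (Rle_lt_dec L 0) as [h|h]; [|lra]. nra. }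
set (Q := m * ln 2 * ln 2 / L).
assert (HQ : 0 < Q).
{ unfold Q. apply Rdiv_lt_0_compat; [|lra]. repeat apply Rmult_lt_0_compat; lra. }
assert (HKQ : Q <= K * ln 2).
{ unfold Q. apply (Rmult_le_reg_r L); [lra|]. field_simplify; [|lra]. nra. }
assert (HlnQ : ln Q = L - ln 2 + 2 * l - ln L).
{ assert (Hlm : ln m = L - ln 2). { rewrite HL, ln_mult; lra. }
  unfold Q. unfold Rdiv. rewrite !ln_mult, ln_Rinv;
  try (apply Rinv_0_lt_compat; lra); try (repeat apply Rmult_lt_0_compat; lra).
  unfold l; lra. }
assert (HlnL : ln L <= (1 - th) * L / 2 - 1 + D).
{ set (y := (1 - th) * L / 2).
  assert (Hy : 0 < y) by (unfold y; nra).
  assert (E : L = y * (2 / (1 - th))) by (unfold y; field; lra).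
  rewrite E at 1. rewrite ln_mult; [|lra|apply Rdiv_lt_0_compat; lra].
  pose proof (ln_le_sub1 y Hy). unfold D. lra. }
assert (HQth : th * L <= ln Q) by lra.
assert (HexpQ : exp (th * L) <= Q).
{ rewrite <- (exp_ln Q HQ). apply exp_le'; lra. }
pose proof (exp_ineq1_le (th * L)) as He.
assert (HK : 1 + th * L <= K) by nra.
assert (HK1 : K * (1 - th) >= 1) by nra.
assert (HN1 : 0 < ln N) by nra.
assert (HlnlnN : th * L <= ln (ln N)).
{ apply (Rle_trans _ (ln Q)); [lra|]. apply ln_le'; lra. }
assert (Hlnln0 : 0 < ln (ln N)) by nra.
split; [nra|split; [nra|]].
assert (Hexp : c * ln N / ln (ln N) <= (K - 1) * ln 2).
{ apply (Rmult_le_reg_r (ln (ln N))); [lra|].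
  field_simplify; [|lra].
  assert (c * ln N <= c * (K * L)) by nra.
  assert ((K - 1) * ln 2 * (th * L) <= (K - 1) * ln 2 * ln (ln N)).
  { apply Rmult_le_compat_l; nra. }
  assert (th * K <= K - 1) by nra.
  nra. }
apply (Rle_trans _ (exp ((K - 1) * ln 2))); [apply exp_le'; exact Hexp|].
assert (E2 : exp ((K - 1) * ln 2) = Rpower 2 K / 2).
{ unfold Rpower. replace ((K - 1) * ln 2) with (K * ln 2 + - ln 2) by ring.
  rewrite exp_plus, exp_Ropp, exp_ln; lra. }
assert (E4 : 4 <= Rpower 2 K).
{ unfold Rpower. replace 4 with (exp (ln 2 + ln 2)).
  - apply exp_le'; nra.
  - rewrite exp_plus, exp_ln; lra. }
lra.
Qed.

Lemma mainN (eps : R) : 0 < eps < 1 -> forall N : nat, exists n : nat,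
  (N < n)%nat /\ (3 <= n)%nat /\
  INR (R3 n) >= 1 * exp (ln (2 - eps) * ln (INR n) / ln (ln (INR n))).
Proof.
intros Heps N.
pose proof ln2_bounds as Hl2.
set (c := ln (2 - eps)).
assert (Hc0 : 0 < c). { unfold c; rewrite <- ln_1; apply ln_increasing; lra. }
assert (Hc1 : c < ln 2). { unfold c; apply ln_increasing; lra. }
set (r := c / ln 2).
assert (Hr : c = r * ln 2) by (unfold r; field; lra).
assert (Hr0 : 0 < r < 1).
{ split; [unfold r; apply Rdiv_lt_0_compat; lra|].
  apply (Rmult_lt_reg_r (ln 2)); lra. }
set (th := (1 + r) / 2).
assert (Hth : 1/2 < th < 1) by (unfold th; lra).
assert (Hcth : c <= th * th * ln 2).
{ rewrite Hr. unfold th.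
  assert (0 <= (1 - r) * (1 - r) * ln 2) by (apply Rmult_le_pos; nra).
  nra. }
set (E := ln (2 / (1 - th)) + ln 2 - 2 * ln (ln 2)).
set (Y := Rmax (2 * Rabs E / (1 - th)) (Rmax (1 / (th * (1 - th))) ((INR N + 1) / th))).
destruct (INR_unbounded (exp Y)) as [m Hm].
assert (HexpY : 0 < exp Y) by apply exp_pos.
assert (Hm0 : (0 < m)%nat).
{ destruct m; [simpl in Hm; lra| lia]. }
set (L := ln (2 * INR m)).
assert (HLY : Y <= L).
{ unfold L. rewrite <- (ln_exp Y). apply ln_le'; [lra|].
  pose proof (pos_INR m). lra. }
assert (HY1 : 2 * Rabs E / (1 - th) <= L).
{ eapply Rle_trans; [apply Rmax_l|]. unfold Y in HLY. exact HLY. }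
assert (HY2 : 1 / (th * (1 - th)) <= L).
{ eapply Rle_trans; [|exact HLY]. unfold Y.
  eapply Rle_trans; [|apply Rmax_r]. apply Rmax_l. }
assert (HY3 : (INR N + 1) / th <= L).
{ eapply Rle_trans; [|exact HLY]. unfold Y.
  eapply Rle_trans; [|apply Rmax_r]. apply Rmax_r. }
assert (H1 : (1 - th) * L / 2 >= E).
{ assert (E <= Rabs E) by apply RRle_abs.
  assert ((1 - th) * (2 * Rabs E / (1 - th)) / 2 = Rabs E) by (field; lra).
  nra. }
assert (H2 : th * (1 - th) * L >= 1).
{ assert (th * (1 - th) * (1 / (th * (1 - th))) = 1) by (field; lra).
  assert (0 < th * (1 - th)) by nra. nra. }
assert (H3 : INR N + 1 <= th * L).
{ assert (th * ((INR N + 1) / th) = INR N + 1) by (field; lra). nra. }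
destruct (NT.partA m Hm0) as [k [n [Ha [Hb [Hc Hd]]]]].
assert (Hmr : 0 < INR m) by (apply lt_0_INR; lia).
assert (E2 : INR (2 * m) = 2 * INR m) by (rewrite mult_INR; simpl; ring).
assert (Hpow : forall a b : nat, INR (Nat.pow a b) = INR a ^ b) by (intros; apply pow_INR).
assert (I2 : INR 2 = 2) by (simpl; ring).
assert (Hk2 : 1 <= 2 ^ k) by (apply pow_R1_Rle; lra).
assert (Hn0 : 0 < INR n).
{ apply le_INR in Hc. rewrite Hpow, I2 in Hc. lra. }
assert (Ha' : INR m * ln 2 <= INR k * L).
{ apply le_INR in Ha. rewrite !Hpow, E2, I2 in Ha.
  apply ln_le' in Ha; [|apply pow_lt; lra].
  rewrite !ln_pow in Ha; try lra. unfold L. lra. }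
assert (Hb' : ln (INR n) <= INR k * L).
{ apply le_INR in Hb. rewrite Hpow, E2 in Hb.
  apply ln_le' in Hb; [|lra]. rewrite ln_pow in Hb; [|lra]. unfold L; lra. }
assert (Hc' : INR k * ln 2 <= ln (INR n)).
{ apply le_INR in Hc. rewrite Hpow, I2 in Hc.
  apply ln_le' in Hc; [|apply pow_lt; lra]. rewrite ln_pow in Hc; lra. }
assert (Hd' : Rpower 2 (INR k) - 2 <= INR (R3 n)).
{ apply le_INR in Hd. rewrite plus_INR, Hpow, I2 in Hd.
  rewrite Rpower_pow; [|lra]. lra. }
destruct (keyR c th (INR k) L (INR n) (INR (R3 n)) (INR m) Hc0 Hcth Hth Hmr
  eq_refl H1 H2 Ha' Hb' Hc' Hd') as [K1 [K2 K3]].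
assert (HkN : (N < k)%nat). { apply INR_lt. lra. }
assert (Hk3 : (2 < k)%nat). { apply INR_lt. simpl. lra. }
assert (Hkn : (k < n)%nat).
{ pose proof (Nat.pow_gt_lin_r 2 k ltac:(lia)). lia. }
exists n. split; [lia|split; [lia|]].
rewrite Rmult_1_l. apply Rle_ge. exact K3.
Qed.

From Stdlib Require Import ClassicalEpsilon.

Theorem mainTheorem9 :
  forall eps : R, 0 < eps < 1 ->
  exists M : R, 0 < M /\
  exists nseq : nat -> nat,
    (forall j, (3 <= nseq j)%nat) /\
    (forall j, (nseq j < nseq (S j))%nat) /\
    (forall j,
       INR (R3 (nseq j)) >=
       M * exp (ln (2 - eps) * ln (INR (nseq j)) / ln (ln (INR (nseq j))))).
Proof.
intros eps Heps.
pose (F := fun N => proj1_sig (constructive_indefinite_description _ (mainN eps Heps N))).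
assert (HF : forall N, (N < F N)%nat /\ (3 <= F N)%nat /\
  INR (R3 (F N)) >= 1 * exp (ln (2 - eps) * ln (INR (F N)) / ln (ln (INR (F N))))).
{ intros N. unfold F. destruct (constructive_indefinite_description _ _) as [n Hn]. exact Hn. }
exists 1. split; [lra|].
exists (fix g j := match j with O => F O | S j' => F (g j') end).
split; [|split].
- intros [|j]; apply HF.
- intros j. apply HF.
- intros [|j]; apply HF.
Qed.
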